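(* Let $\eta>0$, $G=(-\eta,1+\eta)\times\mathbb{R}^{n-1}$, and let $\Xi:\mathbb{R}\times\mathbb{R}\times C^2([0,1],\mathbb{R}^{n-1})\to C^2([0,1],\mathbb{R}^n)$ be $\Xi(a,b,u)(t)=((1-t)a+tb,\,u(t))$. Let $p:\Omega([0,1],G)\to\hat{\Omega}([0,1],G)$ be the quotient projection. Then there exist $\delta\in(0,\eta)$ and an open neighborhood $W_5$ of $(0,1,0)$ in $(-\delta,\delta)\times(1-\delta,1+\delta)\times C^2([0,1],\mathbb{R}^{n-1})$ such that $\Xi(W_5)\subseteq\Omega([0,1],G)$, the set $\hat W_5=p\circ\Xi(W_5)$ is open in $\hat{\Omega}([0,1],G)$, and $p\circ\Xi:W_5\to\hat W_5$ is a homeomorphism.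
   Context: $\Omega([0,1],G)$ is the space of $C^2$ immersions $[0,1]\to G$ with the $C^2$ topology. $\mathrm{Diff}_2([0,1])$ is the set of $C^2$ diffeomorphisms $\tau$ of $[0,1]$ with $\tau(0)=0$, $\tau(1)=1$; $f\sim g$ iff $f=g\circ\tau$ for some $\tau\in\mathrm{Diff}_2([0,1])$, and $\hat{\Omega}([0,1],G)=\Omega([0,1],G)/\sim$ with the quotient topology. $\mathbb{R}\times\mathbb{R}\times C^2([0,1],\mathbb{R}^{n-1})$ carries the norm $|a|+|b|+\|u\|_{C^2}$. *)

(* Defs.v *)
(* concrete reals R.  Maps [0,1] -> R^k are represented as
   f : R -> nat -> R; only the values at t in [0,1] and coordinates i < k
   matter (all notions below only inspect those). *)
From Stdlib Require Import Reals.
Open Scope R_scope.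

Definition I01 (t : R) : Prop := 0 <= t <= 1.

Definition has_deriv01 (f f1 : R -> R) : Prop :=
  forall t, I01 t -> forall eps, 0 < eps -> exists del, 0 < del /\
    forall s, I01 s -> s <> t -> Rabs (s - t) < del ->
      Rabs ((f s - f t) / (s - t) - f1 t) < eps.

Definition cont01 (f : R -> R) : Prop :=
  forall t, I01 t -> forall eps, 0 < eps -> exists del, 0 < del /\
    forall s, I01 s -> Rabs (s - t) < del -> Rabs (f s - f t) < eps.

Definition C2data (f f1 f2 : R -> R) : Prop :=
  has_deriv01 f f1 /\ has_deriv01 f1 f2 /\ cont01 f2.

Definition isC2 (f : R -> R) : Prop := exists f1 f2, C2data f f1 f2.

Definition C2vdata (k : nat) (f f1 f2 : R -> nat -> R) : Prop :=
  forall i, (i < k)%nat -> C2data (fun t => f t i) (fun t => f1 t i) (fun t => f2 t i).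

Definition isC2v (k : nat) (f : R -> nat -> R) : Prop :=
  exists f1 f2, C2vdata k f f1 f2.

(* g lies in the C^2-ball of radius r around f (sup over t in [0,1],
   coordinates and derivatives of order <= 2; generates the C^2 topology) *)
Definition c2near (k : nat) (f g : R -> nat -> R) (r : R) : Prop :=
  exists f1 f2 g1 g2, C2vdata k f f1 f2 /\ C2vdata k g g1 g2 /\
    forall t i, I01 t -> (i < k)%nat ->
      Rabs (f t i - g t i) < r /\ Rabs (f1 t i - g1 t i) < r /\
      Rabs (f2 t i - g2 t i) < r.

(* G = (-eta, 1+eta) x R^m  inside R^(m+1) (coordinate 0 is the first) *)
Definition inG (eta : R) (x : nat -> R) : Prop := - eta < x 0%nat < 1 + eta.

Definition Omega (m : nat) (eta : R) (f : R -> nat -> R) : Prop :=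
  (forall t, I01 t -> inG eta (f t)) /\
  exists f1 f2, C2vdata (S m) f f1 f2 /\
    forall t, I01 t -> exists i, (i < S m)%nat /\ f1 t i <> 0.

Definition Diff2 (tau : R -> R) : Prop :=
  isC2 tau /\ tau 0 = 0 /\ tau 1 = 1 /\ (forall t, I01 t -> I01 (tau t)) /\
  exists sigma, isC2 sigma /\ (forall t, I01 t -> I01 (sigma t)) /\
    (forall t, I01 t -> sigma (tau t) = t /\ tau (sigma t) = t).

Definition reparam (m : nat) (f g : R -> nat -> R) : Prop :=
  exists tau, Diff2 tau /\ forall t i, I01 t -> (i < S m)%nat -> f t i = g (tau t) i.

Definition OmegaOpen (m : nat) (eta : R) (Sset : (R -> nat -> R) -> Prop) : Prop :=
  (forall f, Sset f -> Omega m eta f) /\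
  forall f, Sset f -> exists r, 0 < r /\
    forall g, Omega m eta g -> c2near (S m) f g r -> Sset g.

(* subsets of Omega saturated for ~ (= preimages p^{-1}(U) of subsets U of the
   quotient); U is open in the quotient topology iff p^{-1}(U) is OmegaOpen *)
Definition saturated (m : nat) (eta : R) (Sset : (R -> nat -> R) -> Prop) : Prop :=
  forall f g, Sset f -> Omega m eta g -> reparam m g f -> Sset g.

Definition X := (R * R * (R -> nat -> R))%type.

Definition Xnear (m : nat) (w w' : X) (r : R) : Prop :=
  let '(a, b, u) := w in let '(a', b', u') := w' in
  Rabs (a - a') < r /\ Rabs (b - b') < r /\ c2near m u u' r.

Definition inX (m : nat) (w : X) : Prop := let '(_, _, u) := w in isC2v m u.

(* equality of elements of X (u only matters on [0,1], coordinates < m) *)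
Definition Xeq (m : nat) (w w' : X) : Prop :=
  let '(a, b, u) := w in let '(a', b', u') := w' in
  a = a' /\ b = b' /\ forall t i, I01 t -> (i < m)%nat -> u t i = u' t i.

Definition XOpen (m : nat) (V : X -> Prop) : Prop :=
  (forall w, V w -> inX m w) /\
  forall w, V w -> exists r, 0 < r /\ forall w', inX m w' -> Xnear m w w' r -> V w'.

Definition Xi (w : X) : R -> nat -> R :=
  let '(a, b, u) := w in
  fun t i => match i with O => (1 - t) * a + t * b | S j => u t j end.

(* p^{-1}(p(Xi(V))) : the saturation of Xi(V) in Omega *)
Definition satImage (m : nat) (eta : R) (V : X -> Prop) (f : R -> nat -> R) : Prop :=
  Omega m eta f /\ exists w, V w /\ reparam m f (Xi w).

(* Main.v *)
Require Import Defs.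
From Stdlib Require Import Reals Lra Lia Psatz Classical ClassicalEpsilon.
Open Scope R_scope.

Definition mono {A : Type} (C : R -> A -> Prop) : Prop :=
  forall d d' x, 0 < d -> d <= d' -> C d x -> C d' x.

Definition glim {A : Type} (C : R -> A -> Prop) (F L : A -> R) : Prop :=
  forall e, 0 < e -> exists d, 0 < d /\ forall x, C d x -> Rabs (F x - L x) < e.

Lemma glim_ext {A : Type} (C : R -> A -> Prop) F G L L' :
  (forall d x, C d x -> F x = G x /\ L x = L' x) -> glim C F L -> glim C G L'.
Proof.
  intros HE H e he. destruct (H e he) as [d [hd Hd]]. exists d; split; auto.
  intros x hx. destruct (HE d x hx) as [E1 E2]. rewrite <- E1, <- E2. auto.
Qed.

Lemma glim_const {A : Type} (C : R -> A -> Prop) L : glim C L L.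
Proof. intros e he; exists 1; split; [lra|]. intros; rewrite Rminus_diag, Rabs_R0; auto. Qed.

Lemma glim_plus {A : Type} (C : R -> A -> Prop) F1 F2 L1 L2 :
  mono C -> glim C F1 L1 -> glim C F2 L2 ->
  glim C (fun x => F1 x + F2 x) (fun x => L1 x + L2 x).
Proof.
  intros Hm H1 H2 e he.
  destruct (H1 (e/2)) as [d1 [hd1 Hd1]]; [lra|].
  destruct (H2 (e/2)) as [d2 [hd2 Hd2]]; [lra|].
  exists (Rmin d1 d2); split; [apply Rmin_glb_lt; auto|].
  intros x hx.
  assert (A1 := Hd1 x (Hm _ _ _ (Rmin_glb_lt _ _ _ hd1 hd2) (Rmin_l _ _) hx)).
  assert (A2 := Hd2 x (Hm _ _ _ (Rmin_glb_lt _ _ _ hd1 hd2) (Rmin_r _ _) hx)).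
  replace (F1 x + F2 x - (L1 x + L2 x)) with ((F1 x - L1 x) + (F2 x - L2 x)) by ring.
  eapply Rle_lt_trans; [apply Rabs_triang|]. lra.
Qed.

Lemma glim_scal {A : Type} (C : R -> A -> Prop) F L k :
  glim C F L -> glim C (fun x => k * F x) (fun x => k * L x).
Proof.
  intros H e he.
  destruct (H (e / (Rabs k + 1))) as [d [hd Hd]].
  { apply Rdiv_lt_0_compat; auto. pose proof (Rabs_pos k); lra. }
  exists d; split; auto. intros x hx. specialize (Hd x hx).
  replace (k * F x - k * L x) with (k * (F x - L x)) by ring.
  rewrite Rabs_mult. pose proof (Rabs_pos k). pose proof (Rabs_pos (F x - L x)).
  assert (Rabs (F x - L x) * (Rabs k + 1) < e).
  { apply (Rmult_lt_compat_r (Rabs k + 1)) in Hd; [|lra].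
    unfold Rdiv in Hd. rewrite Rmult_assoc, Rinv_l in Hd; lra. }
  nra.
Qed.

Lemma prod_est x y a b M1 M2 e :
  Rabs a <= M1 -> Rabs b <= M2 -> 0 < e ->
  Rabs (x - a) < e / (2 * (M2 + 1)) -> Rabs (y - b) < Rmin 1 (e / (2 * (M1 + 1))) ->
  Rabs (x * y - a * b) < e.
Proof.
  intros ha hb he hx hy.
  pose proof (Rabs_pos a); pose proof (Rabs_pos b).
  assert (hy1 := Rlt_le_trans _ _ _ hy (Rmin_l _ _)).
  assert (hy2 := Rlt_le_trans _ _ _ hy (Rmin_r _ _)).
  replace (x * y - a * b) with ((x - a) * ((y - b) + b) + a * (y - b)) by ring.
  eapply Rle_lt_trans; [apply Rabs_triang|]. rewrite !Rabs_mult.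
  pose proof (Rabs_triang (y - b) b).
  pose proof (Rabs_pos (x - a)); pose proof (Rabs_pos (y - b)).
  assert (E1 : Rabs (x - a) * (M2 + 1) < e / 2).
  { apply (Rmult_lt_compat_r (M2 + 1)) in hx; [|lra].
    replace (e / (2 * (M2 + 1)) * (M2 + 1)) with (e / 2) in hx by (field; lra). lra. }
  assert (E2 : M1 * Rabs (y - b) < e / 2).
  { assert (Hp : 0 < M1 + 1) by lra.
    apply (Rmult_lt_compat_r (M1 + 1)) in hy2; [|lra].
    replace (e / (2 * (M1 + 1)) * (M1 + 1)) with (e / 2) in hy2 by (field; lra). nra. }
  assert (Rabs (y - b + b) <= M2 + 1) by lra.
  assert (Rabs (x - a) * Rabs (y - b + b) <= Rabs (x - a) * (M2 + 1)) by nra.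
  assert (Rabs a * Rabs (y - b) <= M1 * Rabs (y - b)) by nra.
  lra.
Qed.

Lemma glim_mult {A : Type} (C : R -> A -> Prop) F1 F2 L1 L2 M1 M2 :
  mono C -> (forall x, C 1 x -> Rabs (L1 x) <= M1 /\ Rabs (L2 x) <= M2) ->
  glim C F1 L1 -> glim C F2 L2 ->
  glim C (fun x => F1 x * F2 x) (fun x => L1 x * L2 x).
Proof.
  intros Hm HB H1 H2 e he.
  assert (M1p : 0 <= M1 \/ forall x, ~ C 1 x).
  { destruct (classic (exists x, C 1 x)) as [[x hx]|hn].
    - left. destruct (HB x hx). pose proof (Rabs_pos (L1 x)); lra.
    - right. intros x hx; apply hn; eauto. }
  assert (M2p : 0 <= M2 \/ forall x, ~ C 1 x).
  { destruct (classic (exists x, C 1 x)) as [[x hx]|hn].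
    - left. destruct (HB x hx). pose proof (Rabs_pos (L2 x)); lra.
    - right. intros x hx; apply hn; eauto. }
  destruct M1p as [M1p|Hn]; [|exists 1; split; [lra|]; intros x hx; exfalso; eapply Hn; eauto].
  destruct M2p as [M2p|Hn]; [|exists 1; split; [lra|]; intros x hx; exfalso; eapply Hn; eauto].
  destruct (H1 (e / (2 * (M2 + 1)))) as [d1 [hd1 Hd1]].
  { apply Rdiv_lt_0_compat; lra. }
  destruct (H2 (Rmin 1 (e / (2 * (M1 + 1))))) as [d2 [hd2 Hd2]].
  { apply Rmin_glb_lt; [lra|]. apply Rdiv_lt_0_compat; lra. }
  set (d := Rmin 1 (Rmin d1 d2)).
  assert (hd : 0 < d) by (unfold d; repeat apply Rmin_glb_lt; lra).
  exists d; split; auto. intros x hx.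
  assert (hdd1 : d <= d1) by (unfold d; eapply Rle_trans; [apply Rmin_r|apply Rmin_l]).
  assert (hdd2 : d <= d2) by (unfold d; eapply Rle_trans; [apply Rmin_r|apply Rmin_r]).
  assert (hdd : d <= 1) by (unfold d; apply Rmin_l).
  destruct (HB x (Hm _ _ _ hd hdd hx)).
  apply (prod_est _ _ _ _ M1 M2); auto; [apply Hd1|apply Hd2]; eapply Hm; eauto.
Qed.

Lemma inv_est x a c e :
  0 < c -> c <= Rabs a -> 0 < e -> Rabs (x - a) < Rmin (c / 2) (e * c * c / 2) ->
  Rabs (/ x - / a) < e.
Proof.
  intros hc ha he hx.
  assert (h1 := Rlt_le_trans _ _ _ hx (Rmin_l _ _)).
  assert (h2 := Rlt_le_trans _ _ _ hx (Rmin_r _ _)).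
  assert (hxa : c / 2 <= Rabs x).
  { pose proof (Rabs_triang_inv a x). rewrite Rabs_minus_sym in h1. lra. }
  assert (a <> 0) by (intro; subst; rewrite Rabs_R0 in ha; lra).
  assert (x <> 0) by (intro; subst; rewrite Rabs_R0 in hxa; lra).
  replace (/ x - / a) with ((a - x) / (x * a)) by (field; auto).
  unfold Rdiv. rewrite Rabs_mult, Rabs_inv, Rabs_mult, Rabs_minus_sym.
  assert (0 < Rabs x * Rabs a) by nra.
  apply (Rmult_lt_reg_r (Rabs x * Rabs a)); auto.
  rewrite Rmult_assoc, Rinv_l by lra. rewrite Rmult_1_r.
  assert (c / 2 * c <= Rabs x * Rabs a) by nra.
  assert (e * c * c / 2 <= e * (Rabs x * Rabs a)) by nra.
  lra.
Qed.

Lemma glim_inv {A : Type} (C : R -> A -> Prop) F L c :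
  mono C -> 0 < c -> (forall x, C 1 x -> c <= Rabs (L x)) ->
  glim C F L -> glim C (fun x => / F x) (fun x => / L x).
Proof.
  intros Hm hc HB H e he.
  destruct (H (Rmin (c / 2) (e * c * c / 2))) as [d1 [hd1 Hd1]].
  { apply Rmin_glb_lt; [lra|]. apply Rdiv_lt_0_compat; [|lra]. repeat apply Rmult_lt_0_compat; lra. }
  exists (Rmin 1 d1); split; [apply Rmin_glb_lt; lra|].
  intros x hx.
  assert (hp : 0 < Rmin 1 d1) by (apply Rmin_glb_lt; lra).
  apply (inv_est _ _ c); auto.
  - apply HB. apply (Hm _ _ _ hp (Rmin_l _ _) hx).
  - apply Hd1. apply (Hm _ _ _ hp (Rmin_r _ _) hx).
Qed.
Definition C01 (t : R) : R -> R -> Prop := fun d s => I01 s /\ s <> t /\ Rabs (s - t) < d.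
Definition Cc (t : R) : R -> R -> Prop := fun d s => I01 s /\ Rabs (s - t) < d.

Lemma mono_C01 t : mono (C01 t).
Proof. unfold mono, C01; intros d d' x _ h [? [? ?]]; split; [auto|split; [auto|lra]]. Qed.
Lemma mono_Cc t : mono (Cc t).
Proof. unfold mono, Cc; intros d d' x _ h [? ?]; split; [auto|lra]. Qed.

Lemma glim_mult_c {A : Type} (C : R -> A -> Prop) F1 F2 l1 l2 :
  mono C -> glim C F1 (fun _ => l1) -> glim C F2 (fun _ => l2) ->
  glim C (fun x => F1 x * F2 x) (fun _ => l1 * l2).
Proof.
  intros Hm H1 H2. apply (glim_mult C F1 F2 (fun _ => l1) (fun _ => l2) (Rabs l1) (Rabs l2)); auto.
  intros; split; lra.
Qed.

Lemma glim_inv_c {A : Type} (C : R -> A -> Prop) F l :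
  mono C -> l <> 0 -> glim C F (fun _ => l) -> glim C (fun x => / F x) (fun _ => / l).
Proof.
  intros Hm hl H. apply (glim_inv C F (fun _ => l) (Rabs l)); auto.
  - apply Rabs_pos_lt; auto.
  - intros; lra.
Qed.

Lemma deriv_glim f f1 t : has_deriv01 f f1 -> I01 t ->
  glim (C01 t) (fun s => (f s - f t) / (s - t)) (fun _ => f1 t).
Proof.
  intros H ht e he. destruct (H t ht e he) as [d [hd Hd]]. exists d; split; auto.
  intros s [? [? ?]]; auto.
Qed.

Lemma glim_deriv f f1 : (forall t, I01 t ->
  glim (C01 t) (fun s => (f s - f t) / (s - t)) (fun _ => f1 t)) -> has_deriv01 f f1.
Proof.
  intros H t ht e he. destruct (H t ht e he) as [d [hd Hd]]. exists d; split; auto.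
  intros s hs hst hd'. apply (Hd s). split; [auto|split; auto].
Qed.

Lemma cont_glim f t : cont01 f -> I01 t -> glim (Cc t) f (fun _ => f t).
Proof.
  intros H ht e he. destruct (H t ht e he) as [d [hd Hd]]. exists d; split; auto.
  intros s [? ?]; auto.
Qed.

Lemma glim_cont f : (forall t, I01 t -> glim (Cc t) f (fun _ => f t)) -> cont01 f.
Proof.
  intros H t ht e he. destruct (H t ht e he) as [d [hd Hd]]. exists d; split; auto.
  intros s hs hd'. apply (Hd s). split; auto.
Qed.

Lemma glim_Cc_C01 F L t : glim (Cc t) F L -> glim (C01 t) F L.
Proof.
  intros H e he. destruct (H e he) as [d [hd Hd]]. exists d; split; auto.
  intros s [? [? ?]]. apply Hd. split; auto.
Qed.

Lemma glim_C01_Cc F t : glim (C01 t) F (fun _ => F t) -> glim (Cc t) F (fun _ => F t).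
Proof.
  intros H e he. destruct (H e he) as [d [hd Hd]]. exists d; split; auto.
  intros s [hs hd']. destruct (Req_dec s t) as [->|hne].
  - rewrite Rminus_diag, Rabs_R0; auto.
  - apply Hd. split; [auto|split; auto].
Qed.

Lemma glim_id_C01 t : glim (C01 t) (fun s => s - t) (fun _ => 0).
Proof.
  intros e he. exists e; split; auto. intros s [? [? ?]]. rewrite Rminus_0_r; auto.
Qed.

Lemma deriv_cont f f1 : has_deriv01 f f1 -> cont01 f.
Proof.
  intros H. apply glim_cont. intros t ht. apply glim_C01_Cc.
  assert (G := glim_plus _ _ _ _ _ (mono_C01 t) (glim_const (C01 t) (fun _ => f t))
     (glim_mult_c _ _ _ _ _ (mono_C01 t) (deriv_glim f f1 t H ht) (glim_id_C01 t))).
  eapply glim_ext; [|exact G]. intros d s [? [hne ?]]. simpl. split; [|ring].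
  field. lra.
Qed.

Lemma cont01_ext f g : cont01 f -> (forall t, I01 t -> f t = g t) -> cont01 g.
Proof.
  intros H E t ht e he. destruct (H t ht e he) as [d [hd Hd]]. exists d; split; auto.
  intros s hs hsd. rewrite <- !E; auto.
Qed.

Lemma cont01_const c : cont01 (fun _ => c).
Proof. intros t ht e he; exists 1; split; [lra|]; intros; rewrite Rminus_diag, Rabs_R0; auto. Qed.

Lemma cont01_id : cont01 (fun t => t).
Proof. intros t ht e he; exists e; split; auto. Qed.

Lemma cont01_plus f g : cont01 f -> cont01 g -> cont01 (fun t => f t + g t).
Proof.
  intros Hf Hg. apply glim_cont; intros t ht.
  exact (glim_plus _ _ _ _ _ (mono_Cc t) (cont_glim f t Hf ht) (cont_glim g t Hg ht)).
Qed.

Lemma cont01_scal k f : cont01 f -> cont01 (fun t => k * f t).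
Proof.
  intros Hf. apply glim_cont; intros t ht.
  exact (glim_scal _ _ _ k (cont_glim f t Hf ht)).
Qed.

Lemma cont01_mult f g : cont01 f -> cont01 g -> cont01 (fun t => f t * g t).
Proof.
  intros Hf Hg. apply glim_cont; intros t ht.
  exact (glim_mult_c _ _ _ _ _ (mono_Cc t) (cont_glim f t Hf ht) (cont_glim g t Hg ht)).
Qed.

Lemma cont01_inv f : cont01 f -> (forall t, I01 t -> f t <> 0) -> cont01 (fun t => / f t).
Proof.
  intros Hf Hn. apply glim_cont; intros t ht.
  exact (glim_inv_c _ _ _ (mono_Cc t) (Hn t ht) (cont_glim f t Hf ht)).
Qed.

Lemma cont01_comp F s : cont01 F -> cont01 s -> (forall t, I01 t -> I01 (s t)) ->
  cont01 (fun t => F (s t)).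
Proof.
  intros HF Hs Hi t ht e he.
  destruct (HF (s t) (Hi t ht) e he) as [d1 [hd1 Hd1]].
  destruct (Hs t ht d1 hd1) as [d2 [hd2 Hd2]].
  exists d2; split; auto.
Qed.

Lemma deriv_ext f f1 g g1 : has_deriv01 f f1 ->
  (forall t, I01 t -> f t = g t) -> (forall t, I01 t -> f1 t = g1 t) -> has_deriv01 g g1.
Proof.
  intros H E E1 t ht e he. destruct (H t ht e he) as [d [hd Hd]]. exists d; split; auto.
  intros s hs hst hsd. rewrite <- !E, <- E1; auto.
Qed.

Lemma deriv_const c : has_deriv01 (fun _ => c) (fun _ => 0).
Proof.
  intros t ht e he; exists 1; split; [lra|]; intros s hs hst hsd.
  unfold Rdiv. rewrite Rminus_diag, Rmult_0_l, Rminus_diag, Rabs_R0; auto.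
Qed.

Lemma deriv_id : has_deriv01 (fun t => t) (fun _ => 1).
Proof.
  intros t ht e he; exists 1; split; [lra|]; intros s hs hst hsd.
  replace ((s - t) / (s - t) - 1) with 0 by (field; lra). rewrite Rabs_R0; auto.
Qed.

Lemma deriv_plus f f1 g g1 : has_deriv01 f f1 -> has_deriv01 g g1 ->
  has_deriv01 (fun t => f t + g t) (fun t => f1 t + g1 t).
Proof.
  intros Hf Hg. apply glim_deriv; intros t ht.
  assert (G := glim_plus _ _ _ _ _ (mono_C01 t) (deriv_glim f f1 t Hf ht) (deriv_glim g g1 t Hg ht)).
  eapply glim_ext; [|exact G]. intros d s [? [hne ?]]. simpl. split; [|auto].
  field. lra.
Qed.

Lemma deriv_scal k f f1 : has_deriv01 f f1 -> has_deriv01 (fun t => k * f t) (fun t => k * f1 t).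
Proof.
  intros Hf. apply glim_deriv; intros t ht.
  assert (G := glim_scal _ _ _ k (deriv_glim f f1 t Hf ht)).
  eapply glim_ext; [|exact G]. intros d s [? [hne ?]]. simpl. split; [|auto].
  field. lra.
Qed.

Lemma deriv_mult f f1 g g1 : has_deriv01 f f1 -> has_deriv01 g g1 ->
  has_deriv01 (fun t => f t * g t) (fun t => f1 t * g t + f t * g1 t).
Proof.
  intros Hf Hg. apply glim_deriv; intros t ht.
  assert (Gc := glim_Cc_C01 _ _ t (cont_glim g t (deriv_cont g g1 Hg) ht)).
  assert (G := glim_plus _ _ _ _ _ (mono_C01 t)
      (glim_mult_c _ _ _ _ _ (mono_C01 t) (deriv_glim f f1 t Hf ht) Gc)
      (glim_scal _ _ _ (f t) (deriv_glim g g1 t Hg ht))).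
  eapply glim_ext; [|exact G]. intros d s [? [hne ?]]. simpl. split; [|auto].
  field. lra.
Qed.

Lemma deriv_inv f f1 : has_deriv01 f f1 -> (forall t, I01 t -> f t <> 0) ->
  has_deriv01 (fun t => / f t) (fun t => - f1 t / (f t * f t)).
Proof.
  intros Hf Hn. apply glim_deriv; intros t ht.
  assert (Gc := glim_Cc_C01 _ _ t (cont_glim f t (deriv_cont f f1 Hf) ht)).
  assert (Gi := glim_inv_c _ _ _ (mono_C01 t) (Hn t ht) Gc).
  assert (G := glim_scal _ _ _ (- / f t)
      (glim_mult_c _ _ _ _ _ (mono_C01 t) (deriv_glim f f1 t Hf ht) Gi)).
  eapply glim_ext; [|exact G]. intros d s [hs [hne ?]]. simpl.
  assert (f s <> 0) by auto. assert (f t <> 0) by auto.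
  split; field; auto; lra.
Qed.

Definition carath (g : R -> R) (dg : R -> R) (y0 : R) : R -> R :=
  fun y => if Req_EM_T y y0 then dg y0 else (g y - g y0) / (y - y0).

Lemma carath_glim g dg y0 : has_deriv01 g dg -> I01 y0 ->
  glim (Cc y0) (carath g dg y0) (fun _ => dg y0).
Proof.
  intros H hy e he. destruct (H y0 hy e he) as [d [hd Hd]]. exists d; split; auto.
  intros y [hy' hyd]. unfold carath. destruct (Req_EM_T y y0).
  - rewrite Rminus_diag, Rabs_R0; auto.
  - apply Hd; auto.
Qed.

Lemma carath_eq g dg y0 y : y <> y0 -> carath g dg y0 y = (g y - g y0) / (y - y0).
Proof. intros h. unfold carath. destruct (Req_EM_T y y0); tauto. Qed.

Lemma glim_comp_pt phi l s t :
  glim (Cc (s t)) phi (fun _ => l) -> (forall u, I01 u -> I01 (s u)) ->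
  glim (Cc t) s (fun _ => s t) -> glim (Cc t) (fun u => phi (s u)) (fun _ => l).
Proof.
  intros Hp Hi Hs e he. destruct (Hp e he) as [d1 [hd1 Hd1]].
  destruct (Hs d1 hd1) as [d2 [hd2 Hd2]]. exists d2; split; auto.
  intros u [hu hud]. apply Hd1. split; auto. apply Hd2. split; auto.
Qed.

Lemma deriv_comp g dg s ds : has_deriv01 g dg -> has_deriv01 s ds ->
  (forall t, I01 t -> I01 (s t)) ->
  has_deriv01 (fun t => g (s t)) (fun t => dg (s t) * ds t).
Proof.
  intros Hg Hs Hi. apply glim_deriv; intros t ht.
  assert (Gp := glim_comp_pt _ _ s t (carath_glim g dg (s t) Hg (Hi t ht)) Hi
                 (cont_glim s t (deriv_cont s ds Hs) ht)).
  assert (G := glim_mult_c _ _ _ _ _ (mono_C01 t) (glim_Cc_C01 _ _ t Gp) (deriv_glim s ds t Hs ht)).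
  eapply glim_ext; [|exact G]. intros d u [hu [hne ?]]. simpl. split; [|auto].
  destruct (Req_dec (s u) (s t)) as [E|E].
  - rewrite E. unfold Rdiv. rewrite !Rminus_diag. ring.
  - rewrite carath_eq by auto. field. split; lra.
Qed.

Lemma deriv_unique f d1 d2 t : has_deriv01 f d1 -> has_deriv01 f d2 -> I01 t -> d1 t = d2 t.
Proof.
  intros H1 H2 ht. destruct (Req_dec (d1 t) (d2 t)) as [|hne]; auto. exfalso.
  set (e := Rabs (d1 t - d2 t) / 2).
  assert (he : 0 < e) by (unfold e; apply Rdiv_lt_0_compat; [apply Rabs_pos_lt; lra|lra]).
  destruct (H1 t ht e he) as [a1 [ha1 Ha1]]. destruct (H2 t ht e he) as [a2 [ha2 Ha2]].
  set (k := Rmin (1/2) (Rmin a1 a2) / 2).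
  assert (hm : 0 < Rmin (1/2) (Rmin a1 a2)) by (repeat apply Rmin_glb_lt; lra).
  assert (hk : 0 < k) by (unfold k; lra).
  assert (hk1 : k < Rmin (1/2) (Rmin a1 a2)) by (unfold k; lra).
  assert (hk2 : k < 1/2) by (eapply Rlt_le_trans; [exact hk1|apply Rmin_l]).
  assert (hka1 : k < a1) by (eapply Rlt_le_trans; [exact hk1|]; eapply Rle_trans; [apply Rmin_r|apply Rmin_l]).
  assert (hka2 : k < a2) by (eapply Rlt_le_trans; [exact hk1|]; eapply Rle_trans; [apply Rmin_r|apply Rmin_r]).
  destruct ht as [ht0 ht1].
  set (s := if Rle_dec t (1/2) then t + k else t - k).
  assert (hs : I01 s /\ s <> t /\ Rabs (s - t) < a1 /\ Rabs (s - t) < a2).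
  { unfold s; destruct (Rle_dec t (1/2)).
    - replace (t + k - t) with k by ring. rewrite Rabs_pos_eq by lra. unfold I01; repeat split; lra.
    - replace (t - k - t) with (- k) by ring. rewrite Rabs_Ropp, Rabs_pos_eq by lra. unfold I01; repeat split; lra. }
  destruct hs as [hs [hst [hs1 hs2]]].
  specialize (Ha1 s hs hst hs1). specialize (Ha2 s hs hst hs2).
  set (q := (f s - f t) / (s - t)) in *.
  assert (Rabs (d1 t - d2 t) <= Rabs (q - d1 t) + Rabs (q - d2 t)).
  { replace (d1 t - d2 t) with ((q - d2 t) - (q - d1 t)) by ring.
    eapply Rle_trans; [apply Rabs_triang|]. rewrite Rabs_Ropp. lra. }
  unfold e in *. lra.
Qed.

Definition clamp (x : R) : R := Rmax 0 (Rmin 1 x).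
Definition extc (f : R -> R) : R -> R := fun x => f (clamp x).

Lemma clamp_I01 x : I01 (clamp x).
Proof. unfold clamp, I01, Rmax, Rmin. destruct (Rle_dec 1 x); destruct (Rle_dec 0 _); lra. Qed.

Lemma clamp_id x : I01 x -> clamp x = x.
Proof. unfold clamp, I01, Rmax, Rmin. intros. destruct (Rle_dec 1 x); destruct (Rle_dec 0 _); lra. Qed.

Lemma clamp_lip x y : Rabs (clamp x - clamp y) <= Rabs (x - y).
Proof.
  unfold clamp, Rmax, Rmin.
  repeat match goal with |- context [Rle_dec ?a ?b] => destruct (Rle_dec a b)
    | H : context [Rle_dec ?a ?b] |- _ => destruct (Rle_dec a b) end;
  unfold Rabs; repeat destruct Rcase_abs; lra.
Qed.

Lemma cont_pt_extc f x : cont01 f -> continuity_pt (extc f) x.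
Proof.
  intros H. unfold continuity_pt, continue_in, limit1_in, limit_in, D_x, no_cond. simpl.
  unfold R_dist. intros e he.
  destruct (H (clamp x) (clamp_I01 x) e he) as [d [hd Hd]].
  exists d; split; auto. intros y [_ hy]. unfold extc. apply Hd.
  - apply clamp_I01.
  - eapply Rle_lt_trans; [apply clamp_lip|auto].
Qed.

Lemma ucont01 f : cont01 f -> forall e, 0 < e -> exists d, 0 < d /\
  forall x y, I01 x -> I01 y -> Rabs (x - y) < d -> Rabs (f x - f y) < e.
Proof.
  intros H e he.
  destruct (Heine (extc f) (fun c => 0 <= c <= 1) (compact_P3 0 1)
     (fun c _ => cont_pt_extc f c H) (mkposreal e he)) as [d Hd].
  exists d; split; [apply cond_pos|]. intros x y hx hy hxy.
  specialize (Hd x y hx hy hxy). unfold extc in Hd. rewrite !clamp_id in Hd; auto.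
Qed.

Lemma bound01 f : cont01 f -> exists M, 0 <= M /\ forall t, I01 t -> Rabs (f t) <= M.
Proof.
  intros H.
  destruct (continuity_ab_maj (extc f) 0 1 ltac:(lra) (fun c _ => cont_pt_extc f c H)) as [x1 [H1 h1]].
  destruct (continuity_ab_min (extc f) 0 1 ltac:(lra) (fun c _ => cont_pt_extc f c H)) as [x2 [H2 h2]].
  exists (Rabs (extc f x1) + Rabs (extc f x2)). split.
  { pose proof (Rabs_pos (extc f x1)); pose proof (Rabs_pos (extc f x2)); lra. }
  intros t ht. specialize (H1 t ht). specialize (H2 t ht). unfold extc in *.
  rewrite (clamp_id t ht) in H1, H2.
  unfold Rabs; destruct (Rcase_abs (f t)); destruct (Rcase_abs (f (clamp x1)));
  destruct (Rcase_abs (f (clamp x2))); lra.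
Qed.

Lemma min01 f : cont01 f -> (forall t, I01 t -> 0 < f t) ->
  exists c, 0 < c /\ forall t, I01 t -> c <= f t.
Proof.
  intros H Hp.
  destruct (continuity_ab_min (extc f) 0 1 ltac:(lra) (fun c _ => cont_pt_extc f c H)) as [x2 [H2 h2]].
  exists (extc f x2). split.
  - unfold extc. apply Hp. apply clamp_I01.
  - intros t ht. specialize (H2 t ht). unfold extc in *. rewrite (clamp_id t ht) in H2. auto.
Qed.

Lemma ivt01 f x y : cont01 f -> I01 x -> I01 y -> x <= y -> f x * f y <= 0 ->
  exists z, x <= z <= y /\ f z = 0.
Proof.
  intros H hx hy hxy hp.
  assert (Hc : continuity (extc f)) by (intro; apply cont_pt_extc; auto).
  assert (hp' : extc f x * extc f y <= 0) by (unfold extc; rewrite !clamp_id; auto).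
  destruct (IVT_cor (extc f) x y Hc hxy hp') as [z [hz Hz]].
  exists z; split; auto. unfold extc in Hz. rewrite clamp_id in Hz; auto.
  destruct hx, hy; unfold I01; lra.
Qed.

Lemma mvt01 h h1 x y : has_deriv01 h h1 -> I01 x -> I01 y -> x < y ->
  exists c, x < c < y /\ h y - h x = h1 c * (y - x).
Proof.
  intros H hx hy hxy.
  assert (Hc := deriv_cont h h1 H).
  assert (D : forall c, x < c < y -> derivable_pt_lim (extc h) c (h1 c)).
  { intros c hc e he. destruct hx, hy.
    assert (hcI : I01 c) by (unfold I01; lra).
    destruct (H c hcI e he) as [d [hd Hd]].
    assert (hp : 0 < Rmin d (Rmin c (1 - c))) by (repeat apply Rmin_glb_lt; lra).
    exists (mkposreal _ hp). intros k hk0 hk. simpl in hk.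
    assert (k1 : Rabs k < d) by (eapply Rlt_le_trans; [exact hk|apply Rmin_l]).
    assert (k2 : Rabs k < Rmin c (1 - c)) by (eapply Rlt_le_trans; [exact hk|apply Rmin_r]).
    assert (k3 : Rabs k < c) by (eapply Rlt_le_trans; [exact k2|apply Rmin_l]).
    assert (k4 : Rabs k < 1 - c) by (eapply Rlt_le_trans; [exact k2|apply Rmin_r]).
    assert (hs : I01 (c + k)) by (revert k3 k4; unfold I01, Rabs; destruct Rcase_abs; intros; lra).
    unfold extc. rewrite !clamp_id by auto.
    replace k with (c + k - c) at 2 by ring. apply Hd; auto.
    - lra.
    - replace (c + k - c) with k by ring. auto. }
  set (pr1 := fun c (P : x < c < y) => exist (fun l => derivable_pt_abs (extc h) c l) (h1 c) (D c P)).
  destruct (MVT (extc h) id x y pr1 (fun c _ => derivable_pt_id c) hxy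
     (fun c _ => cont_pt_extc h c Hc) (fun c _ => derivable_continuous_pt _ _ (derivable_pt_id c)))
     as [c [P E]].
  exists c; split; auto. rewrite derive_pt_id in E. simpl in E. unfold id, extc in E.
  rewrite !clamp_id in E by auto. lra.
Qed.

Lemma lowbound h h1 c x y : has_deriv01 h h1 -> (forall t, I01 t -> c <= h1 t) ->
  I01 x -> I01 y -> x <= y -> c * (y - x) <= h y - h x.
Proof.
  intros H Hc hx hy hxy. destruct (Req_dec x y) as [->|hne].
  - rewrite !Rminus_diag. lra.
  - destruct (mvt01 h h1 x y H hx hy ltac:(lra)) as [z [hz E]]. rewrite E.
    assert (I01 z) by (destruct hx, hy; unfold I01; lra).
    specialize (Hc z H0). apply Rmult_le_compat_r; lra.
Qed.

Lemma posderiv r r1 : has_deriv01 r r1 -> cont01 r1 -> (forall t, I01 t -> r1 t <> 0) ->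
  r 0 < r 1 -> forall t, I01 t -> 0 < r1 t.
Proof.
  intros H Hc Hn Hr t ht.
  assert (h0 : I01 0) by (unfold I01; lra). assert (h1 : I01 1) by (unfold I01; lra).
  destruct (mvt01 r r1 0 1 H h0 h1 ltac:(lra)) as [z [hz E]].
  assert (hzI : I01 z) by (unfold I01; lra).
  assert (pz : 0 < r1 z) by lra.
  destruct (Rlt_le_dec 0 (r1 t)) as [|hle]; auto. exfalso.
  assert (hlt : r1 t < 0) by (destruct hle; auto; exfalso; apply (Hn t ht); auto).
  destruct (Rle_dec t z).
  - destruct (ivt01 r1 t z Hc ht hzI r0 ltac:(nra)) as [w [hw Hw]].
    apply (Hn w); auto. destruct ht; unfold I01; lra.
  - destruct (ivt01 r1 z t Hc hzI ht ltac:(lra) ltac:(nra)) as [w [hw Hw]].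
    apply (Hn w); auto. destruct ht; unfold I01; lra.
Qed.

Definition choice_fun {A B : Type} (P : A -> B -> Prop) (H : forall a, exists b, P a b) : A -> B :=
  fun a => proj1_sig (constructive_indefinite_description _ (H a)).

Lemma choice_fun_spec {A B : Type} (P : A -> B -> Prop) (H : forall a, exists b, P a b) a :
  P a (choice_fun P H a).
Proof. unfold choice_fun. apply proj2_sig. Qed.

Definition sig1 (h1 sg : R -> R) : R -> R := fun s => / h1 (sg s).
Definition sig2 (h1 h2 sg : R -> R) : R -> R :=
  fun s => - (h2 (sg s) * (/ h1 (sg s) * / h1 (sg s) * / h1 (sg s))).

Lemma inv_fun h h1 h2 : C2data h h1 h2 -> (forall t, I01 t -> 0 < h1 t) -> h 0 = 0 -> h 1 = 1 ->
  exists sg, (forall t, I01 t -> I01 (h t)) /\ (forall s, I01 s -> I01 (sg s) /\ h (sg s) = s) /\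
    (forall t, I01 t -> sg (h t) = t) /\ C2data sg (sig1 h1 sg) (sig2 h1 h2 sg).
Proof.
  intros [Hd [Hd1 Hc2]] Hp H0 H1.
  assert (Hc1 := deriv_cont h1 h2 Hd1). assert (Hc := deriv_cont h h1 Hd).
  destruct (min01 h1 Hc1 Hp) as [c [hc Hcm]].
  assert (LB : forall x y, I01 x -> I01 y -> x <= y -> c * (y - x) <= h y - h x).
  { intros; eapply lowbound; eauto. }
  assert (i0 : I01 0) by (unfold I01; lra). assert (i1 : I01 1) by (unfold I01; lra).
  assert (Hmap : forall t, I01 t -> I01 (h t)).
  { intros t ht. pose proof (LB 0 t i0 ht (proj1 ht)). pose proof (LB t 1 ht i1 (proj2 ht)).
    destruct ht. unfold I01. nra. }
  assert (Hinj : forall x y, I01 x -> I01 y -> h x = h y -> x = y).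
  { intros x y hx hy E. destruct (Rle_dec x y).
    - pose proof (LB x y hx hy r). nra.
    - pose proof (LB y x hy hx ltac:(lra)). nra. }
  assert (E : forall s, exists z, I01 z /\ h z = clamp s).
  { intros s. pose proof (clamp_I01 s) as hs.
    assert (Hcc : cont01 (fun z => h z + - clamp s)) by (apply cont01_plus; auto; apply cont01_const).
    destruct (ivt01 _ 0 1 Hcc i0 i1 ltac:(lra)) as [z [hz Hz]].
    { rewrite H0, H1. destruct hs. nra. }
    exists z; split; [unfold I01; lra|lra]. }
  set (sg := choice_fun _ E).
  assert (Hsg : forall s, I01 s -> I01 (sg s) /\ h (sg s) = s).
  { intros s hs. destruct (choice_fun_spec _ E s) as [A B]. split; auto.
    fold sg in B. rewrite B. apply clamp_id; auto. }
  assert (Hsh : forall t, I01 t -> sg (h t) = t).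
  { intros t ht. destruct (Hsg (h t) (Hmap t ht)) as [A B]. apply Hinj; auto. }
  assert (Lip : forall s u, I01 s -> I01 u -> c * Rabs (sg u - sg s) <= Rabs (u - s)).
  { intros s u hs hu. destruct (Hsg s hs) as [A1 B1]. destruct (Hsg u hu) as [A2 B2].
    destruct (Rle_dec (sg s) (sg u)).
    - pose proof (LB _ _ A1 A2 r). rewrite B1, B2 in H.
      rewrite (Rabs_pos_eq (sg u - sg s)) by lra. rewrite (Rabs_pos_eq (u - s)) by nra. lra.
    - pose proof (LB _ _ A2 A1 ltac:(lra)). rewrite B1, B2 in H.
      rewrite (Rabs_left (sg u - sg s)) by lra. rewrite (Rabs_left (u - s)). lra. nra. }
  assert (Csg : forall s, I01 s -> glim (Cc s) sg (fun _ => sg s)).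
  { intros s hs e he. exists (c * e); split; [nra|]. intros u [hu hud].
    pose proof (Lip s u hs hu). apply (Rmult_lt_reg_l c); auto. lra. }
  assert (Dsg : has_deriv01 sg (sig1 h1 sg)).
  { apply glim_deriv. intros s hs. destruct (Hsg s hs) as [A1 B1].
    assert (G := glim_inv_c _ _ _ (mono_C01 s) (Rgt_not_eq _ _ (Hp _ A1))
       (glim_Cc_C01 _ _ s (glim_comp_pt _ _ sg s (carath_glim h h1 (sg s) Hd A1)
          (fun u hu => proj1 (Hsg u hu)) (Csg s hs)))).
    eapply glim_ext; [|exact G]. intros d u [hu [hne _]]. unfold sig1. split; auto.
    destruct (Hsg u hu) as [A2 B2].
    assert (sg u <> sg s) by (intro E'; apply hne; rewrite <- B1, <- B2, E'; auto).
    rewrite carath_eq by auto. rewrite B1, B2.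
    assert (u - s <> 0) by lra. assert (sg u - sg s <> 0) by lra.
    field. split; auto. }
  exists sg. split; auto. split; auto. split; auto.
  assert (Hsg' : forall t, I01 t -> I01 (sg t)) by (intros; apply Hsg; auto).
  assert (Hn : forall t, I01 t -> h1 (sg t) <> 0) by (intros t ht; apply Rgt_not_eq, Hp, Hsg', ht).
  split; auto. split.
  - assert (G := deriv_inv _ _ (deriv_comp h1 h2 sg _ Hd1 Dsg Hsg') Hn).
    eapply deriv_ext; [exact G| |]; intros t ht; unfold sig1, sig2; auto.
    field. auto.
  - unfold sig2. apply cont01_ext with (fun t => -1 * (h2 (sg t) * (/ h1 (sg t) * / h1 (sg t) * / h1 (sg t)))).
    2: intros; ring.
    apply cont01_scal. assert (Csg' : cont01 sg) by (eapply deriv_cont; eauto).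
    assert (Ci : cont01 (fun t => / h1 (sg t))) by (apply cont01_inv; auto; apply cont01_comp; auto).
    apply cont01_mult; [apply cont01_comp; auto|].
    apply cont01_mult; [apply cont01_mult|]; auto.
Qed.

Lemma C2_ext f f1 f2 g g1 g2 : C2data f f1 f2 ->
  (forall t, I01 t -> f t = g t /\ f1 t = g1 t /\ f2 t = g2 t) -> C2data g g1 g2.
Proof.
  intros [A [B C]] E. split; [|split].
  - eapply deriv_ext; [exact A| |]; intros t ht; apply E; auto.
  - eapply deriv_ext; [exact B| |]; intros t ht; apply E; auto.
  - eapply cont01_ext; [exact C|]; intros t ht; apply E; auto.
Qed.

Lemma C2_affine f f1 f2 k c : C2data f f1 f2 ->
  C2data (fun t => k * f t + c) (fun t => k * f1 t) (fun t => k * f2 t).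
Proof.
  intros [A [B C]]. split; [|split].
  - eapply deriv_ext; [exact (deriv_plus _ _ _ _ (deriv_scal k _ _ A) (deriv_const c))| |];
      intros; simpl; ring.
  - apply deriv_scal; auto.
  - apply cont01_scal; auto.
Qed.

Lemma C2_const c : C2data (fun _ => c) (fun _ => 0) (fun _ => 0).
Proof. split; [apply deriv_const|split; [apply deriv_const|apply cont01_const]]. Qed.

Lemma C2_lin a b : C2data (fun t => (1 - t) * a + t * b) (fun _ => b - a) (fun _ => 0).
Proof.
  split; [|split; [apply deriv_const|apply cont01_const]].
  eapply deriv_ext; [exact (deriv_plus _ _ _ _ (deriv_scal (b - a) _ _ deriv_id) (deriv_const a))| |];
    intros; simpl; ring.
Qed.

Lemma C2_comp F F1 F2 s s1 s2 : C2data F F1 F2 -> C2data s s1 s2 ->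
  (forall t, I01 t -> I01 (s t)) ->
  C2data (fun t => F (s t)) (fun t => F1 (s t) * s1 t)
    (fun t => F2 (s t) * s1 t * s1 t + F1 (s t) * s2 t).
Proof.
  intros [A [B C]] [A' [B' C']] Hi. split; [|split].
  - apply deriv_comp; auto.
  - eapply deriv_ext; [exact (deriv_mult _ _ _ _ (deriv_comp _ _ _ _ B A' Hi) B')| |]; intros; auto.
  - assert (cs : cont01 s) by (eapply deriv_cont; eauto).
    assert (cs1 : cont01 s1) by (eapply deriv_cont; eauto).
    assert (cF1 : cont01 F1) by (eapply deriv_cont; eauto).
    apply cont01_plus; apply cont01_mult; auto; try apply cont01_mult; auto; apply cont01_comp; auto.
Qed.

Definition UC {D : Type} (Cd : R -> D -> Prop) (Q : D -> R -> R) (L : R -> R) : Prop :=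
  forall e, 0 < e -> exists r, 0 < r /\ forall p s, Cd r p -> I01 s -> Rabs (Q p s - L s) < e.

Definition CU {D : Type} (Cd : R -> D -> Prop) : R -> D * R -> Prop :=
  fun r x => Cd r (fst x) /\ I01 (snd x).

Lemma UC_glim {D : Type} (Cd : R -> D -> Prop) Q L :
  UC Cd Q L <-> glim (CU Cd) (fun x => Q (fst x) (snd x)) (fun x => L (snd x)).
Proof.
  split.
  - intros H e he. destruct (H e he) as [r [hr Hr]]. exists r; split; auto.
    intros [p s] [h1 h2]; simpl in *; auto.
  - intros H e he. destruct (H e he) as [r [hr Hr]]. exists r; split; auto.
    intros p s h1 h2. apply (Hr (p, s)). split; auto.
Qed.

Lemma mono_CU {D : Type} (Cd : R -> D -> Prop) : mono Cd -> mono (CU Cd).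
Proof. intros Hm d d' [p s] hd hdd [h1 h2]. split; auto. eapply Hm; eauto. Qed.

Lemma UC_ext {D : Type} (Cd : R -> D -> Prop) Q Q' L L' :
  (forall r p s, Cd r p -> I01 s -> Q p s = Q' p s) -> (forall s, I01 s -> L s = L' s) ->
  UC Cd Q L -> UC Cd Q' L'.
Proof.
  intros E1 E2 H e he. destruct (H e he) as [r [hr Hr]]. exists r; split; auto.
  intros p s hp hs. rewrite <- (E1 r p s), <- E2; auto.
Qed.

Lemma UC_const {D : Type} (Cd : R -> D -> Prop) L : UC Cd (fun _ s => L s) L.
Proof. intros e he; exists 1; split; [lra|]; intros; rewrite Rminus_diag, Rabs_R0; auto. Qed.

Lemma UC_plus {D : Type} (Cd : R -> D -> Prop) Q1 Q2 L1 L2 : mono Cd ->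
  UC Cd Q1 L1 -> UC Cd Q2 L2 -> UC Cd (fun p s => Q1 p s + Q2 p s) (fun s => L1 s + L2 s).
Proof.
  intros Hm H1 H2. apply UC_glim. apply UC_glim in H1, H2.
  exact (glim_plus _ _ _ _ _ (mono_CU Cd Hm) H1 H2).
Qed.

Lemma UC_scal {D : Type} (Cd : R -> D -> Prop) Q L k :
  UC Cd Q L -> UC Cd (fun p s => k * Q p s) (fun s => k * L s).
Proof.
  intros H. apply UC_glim. apply UC_glim in H. exact (glim_scal _ _ _ k H).
Qed.

Lemma UC_mult {D : Type} (Cd : R -> D -> Prop) Q1 Q2 L1 L2 M1 M2 : mono Cd ->
  (forall s, I01 s -> Rabs (L1 s) <= M1) -> (forall s, I01 s -> Rabs (L2 s) <= M2) ->
  UC Cd Q1 L1 -> UC Cd Q2 L2 -> UC Cd (fun p s => Q1 p s * Q2 p s) (fun s => L1 s * L2 s).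
Proof.
  intros Hm B1 B2 H1 H2. apply UC_glim. apply UC_glim in H1, H2.
  apply (glim_mult _ _ _ _ _ M1 M2 (mono_CU Cd Hm)); auto.
  intros [p s] [_ hs]; simpl in *; auto.
Qed.

Lemma UC_inv {D : Type} (Cd : R -> D -> Prop) Q L c : mono Cd -> 0 < c ->
  (forall s, I01 s -> c <= Rabs (L s)) ->
  UC Cd Q L -> UC Cd (fun p s => / Q p s) (fun s => / L s).
Proof.
  intros Hm hc B H. apply UC_glim. apply UC_glim in H.
  apply (glim_inv _ _ _ c (mono_CU Cd Hm)); auto.
  intros [p s] [_ hs]; simpl in *; auto.
Qed.

Lemma UC_comp {D : Type} (Cd : R -> D -> Prop) K H S T : mono Cd ->
  UC Cd K H -> UC Cd S T -> cont01 H ->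
  (forall r p s, Cd r p -> I01 s -> I01 (S p s)) -> (forall s, I01 s -> I01 (T s)) ->
  UC Cd (fun p s => K p (S p s)) (fun s => H (T s)).
Proof.
  intros Hm HK HS HH HSi HTi e he.
  destruct (ucont01 H HH (e/2) ltac:(lra)) as [d [hd Hd]].
  destruct (HS d hd) as [r1 [hr1 Hr1]].
  destruct (HK (e/2) ltac:(lra)) as [r2 [hr2 Hr2]].
  assert (hr : 0 < Rmin r1 r2) by (apply Rmin_glb_lt; auto).
  exists (Rmin r1 r2); split; auto. intros p s hp hs.
  assert (hp1 : Cd r1 p) by (eapply Hm; [exact hr|apply Rmin_l|exact hp]).
  assert (hp2 : Cd r2 p) by (eapply Hm; [exact hr|apply Rmin_r|exact hp]).
  assert (A1 := Hr2 p (S p s) hp2 (HSi _ _ _ hp hs)).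
  assert (A2 := Hd (S p s) (T s) (HSi _ _ _ hp hs) (HTi s hs) (Hr1 p s hp1 hs)).
  replace (K p (S p s) - H (T s)) with ((K p (S p s) - H (S p s)) + (H (S p s) - H (T s))) by ring.
  eapply Rle_lt_trans; [apply Rabs_triang|]. lra.
Qed.

Lemma UC_sig {D : Type} (Cd : R -> D -> Prop) tp tf sp sf c : 0 < c ->
  UC Cd tp tf ->
  (forall r p s, Cd r p -> I01 s -> I01 (sp p s) /\ tp p (sp p s) = s) ->
  (forall s, I01 s -> I01 (sf s) /\ tf (sf s) = s) ->
  (forall x y, I01 x -> I01 y -> x <= y -> c * (y - x) <= tf y - tf x) ->
  UC Cd sp sf.
Proof.
  intros hc H Hp Hf LB e he.
  destruct (H (c * e) ltac:(nra)) as [r [hr Hr]]. exists r; split; auto.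
  intros p s hp hs.
  destruct (Hp r p s hp hs) as [A1 B1]. destruct (Hf s hs) as [A2 B2].
  specialize (Hr p (sp p s) hp A1).
  assert (E : tf (sf s) = tp p (sp p s)) by (rewrite B1, B2; reflexivity).
  assert (K : c * Rabs (sp p s - sf s) <= Rabs (tf (sf s) - tf (sp p s))).
  { destruct (Rle_dec (sf s) (sp p s)).
    - pose proof (LB _ _ A2 A1 r0).
      rewrite (Rabs_pos_eq (sp p s - sf s)) by lra.
      rewrite Rabs_minus_sym, (Rabs_pos_eq (tf (sp p s) - tf (sf s))) by nra. lra.
    - pose proof (LB _ _ A1 A2 ltac:(lra)).
      rewrite (Rabs_left (sp p s - sf s)) by lra.
      rewrite (Rabs_pos_eq (tf (sf s) - tf (sp p s))) by nra. lra. }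
  rewrite E in K.
  apply (Rmult_lt_reg_l c); auto. lra.
Qed.

Lemma UC_fin {D : Type} (Cd : R -> D -> Prop) (P : nat -> D -> Prop) m : mono Cd ->
  (forall j, (j < m)%nat -> exists r, 0 < r /\ forall p, Cd r p -> P j p) ->
  exists r, 0 < r /\ forall p, Cd r p -> forall j, (j < m)%nat -> P j p.
Proof.
  intros Hm. induction m as [|m IH]; intros H.
  - exists 1; split; [lra|]. intros; lia.
  - destruct IH as [r1 [hr1 Hr1]]. { intros j hj; apply H; lia. }
    destruct (H m ltac:(lia)) as [r2 [hr2 Hr2]].
    assert (hr : 0 < Rmin r1 r2) by (apply Rmin_glb_lt; auto).
    exists (Rmin r1 r2); split; auto. intros p hp j hj.
    destruct (Nat.eq_dec j m) as [->|hne].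
    + apply Hr2. eapply Hm; [exact hr|apply Rmin_r|exact hp].
    + apply Hr1; [eapply Hm; [exact hr|apply Rmin_l|exact hp]|lia].
Qed.

Definition W5d (m : nat) (dl : R) (w : X) : Prop :=
  let '(a, b, u) := w in (- dl < a < dl) /\ (1 - dl < b < 1 + dl) /\ isC2v m u.

Definition XiD1 (a b : R) (u1 : R -> nat -> R) : R -> nat -> R :=
  fun t i => match i with O => b - a | S j => u1 t j end.
Definition XiD2 (u2 : R -> nat -> R) : R -> nat -> R :=
  fun t i => match i with O => 0 | S j => u2 t j end.

Lemma Xi_C2 m a b u u1 u2 : C2vdata m u u1 u2 ->
  C2vdata (S m) (Xi (a, b, u)) (XiD1 a b u1) (XiD2 u2).
Proof.
  intros H i hi. destruct i as [|j].
  - simpl. apply C2_lin.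
  - simpl. apply H. lia.
Qed.

Lemma Rmin_lt_l a b c : Rmin a b > c -> a > c.
Proof. intros H. pose proof (Rmin_l a b). lra. Qed.
Lemma Rmin_lt_r a b c : Rmin a b > c -> b > c.
Proof. intros H. pose proof (Rmin_r a b). lra. Qed.

Lemma W5_Omega m eta dl w : 0 < dl < eta -> dl <= 1/4 -> W5d m dl w -> Omega m eta (Xi w).
Proof.
  destruct w as [[a b] u]. intros hd hd4 [ha [hb [u1 [u2 hu]]]]. split.
  - intros t [ht0 ht1]. unfold inG. simpl. split; nra.
  - exists (XiD1 a b u1), (XiD2 u2). split; [apply Xi_C2; auto|].
    intros t ht. exists 0%nat. split; [lia|]. simpl. lra.
Qed.

Lemma W5_open m dl : XOpen m (W5d m dl).
Proof.
  split.
  - intros [[a b] u] [_ [_ H]]. exact H.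
  - intros [[a b] u] [ha [hb hu]].
    set (r := Rmin (Rmin (dl - a) (a + dl)) (Rmin (1 + dl - b) (b - 1 + dl))).
    assert (hr : 0 < r) by (unfold r; repeat apply Rmin_glb_lt; lra).
    exists r; split; auto. intros [[a' b'] u'] hin [h1 [h2 _]].
    assert (r <= dl - a /\ r <= a + dl /\ r <= 1 + dl - b /\ r <= b - 1 + dl) as [r1 [r2 [r3 r4]]].
    { unfold r. repeat split.
      - eapply Rle_trans; [apply Rmin_l|apply Rmin_l].
      - eapply Rle_trans; [apply Rmin_l|apply Rmin_r].
      - eapply Rle_trans; [apply Rmin_r|apply Rmin_l].
      - eapply Rle_trans; [apply Rmin_r|apply Rmin_r]. }
    revert h1 h2; unfold Rabs; destruct (Rcase_abs (a - a')); destruct (Rcase_abs (b - b')); intros;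
    (split; [lra|split; [lra|exact hin]]).
Qed.

Lemma Xi_inj m dl w w' : dl <= 1/4 -> W5d m dl w -> W5d m dl w' ->
  reparam m (Xi w) (Xi w') -> Xeq m w w'.
Proof.
  destruct w as [[a b] u]; destruct w' as [[a' b'] u'].
  intros hd4 [ha [hb _]] [ha' [hb' _]] [tau [[_ [t0 [t1 _]]] E]].
  assert (i0 : I01 0) by (unfold I01; lra). assert (i1 : I01 1) by (unfold I01; lra).
  pose proof (E 0 0%nat i0 ltac:(lia)) as E0. pose proof (E 1 0%nat i1 ltac:(lia)) as E1.
  simpl in E0, E1. rewrite t0 in E0. rewrite t1 in E1.
  assert (a = a') by lra. assert (b = b') by lra. subst a' b'.
  simpl. split; auto. split; auto.
  intros t i ht hi.
  pose proof (E t 0%nat ht ltac:(lia)) as Et. simpl in Et.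
  assert (tau t = t).
  { assert ((b - a) * (tau t - t) = 0) by lra.
    apply Rmult_integral in H. destruct H; lra. }
  pose proof (E t (S i) ht ltac:(lia)) as Es. simpl in Es. rewrite H in Es. auto.
Qed.

Lemma c2near_mono k f g r r' : r <= r' -> c2near k f g r -> c2near k f g r'.
Proof.
  intros hr [f1 [f2 [g1 [g2 [A [B C]]]]]]. exists f1, f2, g1, g2. split; auto. split; auto.
  intros t i ht hi. destruct (C t i ht hi) as [c1 [c2 c3]]. repeat split; lra.
Qed.

Lemma lin_est a b a' b' t r : I01 t -> Rabs (a - a') < r -> Rabs (b - b') < r ->
  Rabs ((1 - t) * a + t * b - ((1 - t) * a' + t * b')) < r.
Proof.
  intros [h0 h1] ha hb.
  replace ((1 - t) * a + t * b - ((1 - t) * a' + t * b')) with ((1 - t) * (a - a') + t * (b - b')) by ring.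
  eapply Rle_lt_trans; [apply Rabs_triang|]. rewrite !Rabs_mult.
  rewrite (Rabs_pos_eq (1 - t)) by lra. rewrite (Rabs_pos_eq t) by lra.
  pose proof (Rabs_pos (a - a')). pose proof (Rabs_pos (b - b')).
  assert ((1 - t) * Rabs (a - a') <= (1 - t) * r) by (apply Rmult_le_compat_l; lra).
  destruct (Req_dec t 0) as [->|hne].
  - lra.
  - assert (t * Rabs (b - b') < t * r) by (apply Rmult_lt_compat_l; lra). lra.
Qed.

Lemma cont_part m eta dl : 0 < dl < eta -> dl <= 1/4 ->
  forall S, OmegaOpen m eta S -> saturated m eta S ->
    XOpen m (fun w => W5d m dl w /\ S (Xi w)).
Proof.
  intros hd hd4 S [_ HS] _. split.
  - intros w [hw _]. apply (proj1 (W5_open m dl)); auto.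
  - intros w [hw hS]. destruct (HS (Xi w) hS) as [r [hr Hr]].
    destruct (proj2 (W5_open m dl) w hw) as [r5 [hr5 Hr5]].
    assert (hp : 0 < Rmin (r / 2) r5) by (apply Rmin_glb_lt; lra).
    exists (Rmin (r / 2) r5); split; auto. intros w' hin hn.
    assert (hw' : W5d m dl w').
    { apply Hr5; auto. destruct w as [[a b] u]; destruct w' as [[a' b'] u'].
      destruct hn as [h1 [h2 h3]]. pose proof (Rmin_r (r/2) r5).
      split; [lra|split; [lra|]]. eapply c2near_mono; [|exact h3]; auto. }
    split; auto. apply Hr; [apply W5_Omega with dl; auto|].
    destruct w as [[a b] u]; destruct w' as [[a' b'] u'].
    destruct hn as [h1 [h2 [u1 [u2 [u1' [u2' [A [B C]]]]]]]].
    pose proof (Rmin_l (r/2) r5).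
    exists (XiD1 a b u1), (XiD2 u2), (XiD1 a' b' u1'), (XiD2 u2').
    split; [apply Xi_C2; auto|]. split; [apply Xi_C2; auto|].
    intros t i ht hi. destruct i as [|j].
    + simpl. split; [|split].
      * assert (Rabs (a - a') < r / 2) by lra. assert (Rabs (b - b') < r / 2) by lra.
        pose proof (lin_est a b a' b' t (r/2) ht H0 H1). lra.
      * replace (b - a - (b' - a')) with ((b - b') - (a - a')) by ring.
        eapply Rle_lt_trans; [apply Rabs_triang|]. rewrite Rabs_Ropp. lra.
      * rewrite Rminus_diag, Rabs_R0. auto.
    + simpl. destruct (C t j ht ltac:(lia)) as [c1 [c2 c3]]. repeat split; lra.
Qed.

Definition tauf (g : R -> nat -> R) : R -> R :=
  fun t => (g t 0%nat - g 0 0%nat) / (g 1 0%nat - g 0 0%nat).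
Definition tau1f (g g1 : R -> nat -> R) : R -> R :=
  fun t => g1 t 0%nat / (g 1 0%nat - g 0 0%nat).
Definition tau2f (g g2 : R -> nat -> R) : R -> R :=
  fun t => g2 t 0%nat / (g 1 0%nat - g 0 0%nat).

Lemma tau_C2 m g g1 g2 : C2vdata (S m) g g1 g2 -> C2data (tauf g) (tau1f g g1) (tau2f g g2).
Proof.
  intros H. assert (H0 := H 0%nat ltac:(lia)). simpl in H0.
  eapply C2_ext; [exact (C2_affine _ _ _ (/ (g 1 0%nat - g 0 0%nat)) (- g 0 0%nat / (g 1 0%nat - g 0 0%nat)) H0)|].
  intros t ht. unfold tauf, tau1f, tau2f, Rdiv. repeat split; ring.
Qed.

Definition Valid (m : nat) (g g1 g2 : R -> nat -> R) (sg : R -> R) : Prop :=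
  C2vdata (S m) g g1 g2 /\ g 0 0%nat < g 1 0%nat /\ (forall t, I01 t -> 0 < g1 t 0%nat) /\
  (forall t, I01 t -> I01 (tauf g t)) /\ (forall s, I01 s -> I01 (sg s) /\ tauf g (sg s) = s) /\
  (forall t, I01 t -> sg (tauf g t) = t) /\
  C2data sg (sig1 (tau1f g g1) sg) (sig2 (tau1f g g1) (tau2f g g2) sg).

Lemma mk_valid m g g1 g2 : C2vdata (S m) g g1 g2 -> g 0 0%nat < g 1 0%nat ->
  (forall t, I01 t -> 0 < g1 t 0%nat) -> exists sg, Valid m g g1 g2 sg.
Proof.
  intros H hab hp.
  destruct (inv_fun (tauf g) (tau1f g g1) (tau2f g g2) (tau_C2 m g g1 g2 H)) as [sg [A [B [C D]]]].
  - intros t ht. unfold tau1f. apply Rdiv_lt_0_compat; auto. lra.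
  - unfold tauf. unfold Rdiv. rewrite Rminus_diag. ring.
  - unfold tauf. field. lra.
  - exists sg. exact (conj H (conj hab (conj hp (conj A (conj B (conj C D)))))).
Qed.

Definition uof (g : R -> nat -> R) (sg : R -> R) : R -> nat -> R := fun s j => g (sg s) (S j).
Definition u1of (g1 : R -> nat -> R) (sg s1 : R -> R) : R -> nat -> R :=
  fun s j => g1 (sg s) (S j) * s1 s.
Definition u2of (g1 g2 : R -> nat -> R) (sg s1 s2 : R -> R) : R -> nat -> R :=
  fun s j => g2 (sg s) (S j) * s1 s * s1 s + g1 (sg s) (S j) * s2 s.

Lemma valid_u_C2 m g g1 g2 sg : Valid m g g1 g2 sg ->
  C2vdata m (uof g sg) (u1of g1 sg (sig1 (tau1f g g1) sg))
    (u2of g1 g2 sg (sig1 (tau1f g g1) sg) (sig2 (tau1f g g1) (tau2f g g2) sg)).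
Proof.
  intros [H [_ [_ [_ [B [_ D]]]]]] j hj. unfold uof, u1of, u2of.
  apply (C2_comp (fun t => g t (S j)) (fun t => g1 t (S j)) (fun t => g2 t (S j))).
  - apply H. lia.
  - exact D.
  - intros; apply B; auto.
Qed.

Lemma valid_reparam m g g1 g2 sg : Valid m g g1 g2 sg ->
  reparam m g (Xi (g 0 0%nat, g 1 0%nat, uof g sg)).
Proof.
  intros [H [hab [hp [hm [B [C D]]]]]]. exists (tauf g). split.
  - split; [exists (tau1f g g1), (tau2f g g2); eapply tau_C2; eauto|].
    split; [unfold tauf, Rdiv; rewrite Rminus_diag; ring|].
    split; [unfold tauf; field; lra|].
    split; auto. exists sg. split; [exists (sig1 (tau1f g g1) sg), (sig2 (tau1f g g1) (tau2f g g2) sg); auto|].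
    split; [intros; apply B; auto|]. intros t ht. split; auto. apply B; auto.
  - intros t i ht hi. destruct i as [|j]; simpl.
    + unfold tauf. field. lra.
    + unfold uof. rewrite C; auto.
Qed.

Definition Dt : Type := ((R -> nat -> R) * (R -> nat -> R) * (R -> nat -> R) * (R -> R))%type.
Definition dg (p : Dt) : R -> nat -> R := fst (fst (fst p)).
Definition dg1 (p : Dt) : R -> nat -> R := snd (fst (fst p)).
Definition dg2 (p : Dt) : R -> nat -> R := snd (fst p).
Definition dsg (p : Dt) : R -> R := snd p.

Definition Cdat (m : nat) (f f1 f2 : R -> nat -> R) (r : R) (p : Dt) : Prop :=
  Valid m (dg p) (dg1 p) (dg2 p) (dsg p) /\
  forall t i, I01 t -> (i < S m)%nat ->
    Rabs (f t i - dg p t i) < r /\ Rabs (f1 t i - dg1 p t i) < r /\ Rabs (f2 t i - dg2 p t i) < r.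

Lemma mono_Cdat m f f1 f2 : mono (Cdat m f f1 f2).
Proof.
  intros d d' p hd hdd [V B]. split; auto. intros t i ht hi.
  destruct (B t i ht hi) as [b1 [b2 b3]]. repeat split; lra.
Qed.

Lemma bnd_mult x y a b : Rabs x <= a -> Rabs y <= b -> Rabs (x * y) <= a * b.
Proof.
  intros. rewrite Rabs_mult. apply Rmult_le_compat; auto; apply Rabs_pos.
Qed.

Lemma bnd_comp F sf : cont01 F -> (forall s, I01 s -> I01 (sf s)) ->
  exists M, forall s, I01 s -> Rabs (F (sf s)) <= M.
Proof.
  intros H Hs. destruct (bound01 F H) as [M [_ HM]]. exists M. intros; apply HM; auto.
Qed.

Lemma conv m f f1 f2 sf j : Valid m f f1 f2 sf -> (j < m)%nat ->
  forall e, 0 < e -> exists r, 0 < r /\ forall p, Cdat m f f1 f2 r p -> forall s, I01 s ->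
    Rabs (uof f sf s j - uof (dg p) (dsg p) s j) < e /\
    Rabs (u1of f1 sf (sig1 (tau1f f f1) sf) s j -
          u1of (dg1 p) (dsg p) (sig1 (tau1f (dg p) (dg1 p)) (dsg p)) s j) < e /\
    Rabs (u2of f1 f2 sf (sig1 (tau1f f f1) sf) (sig2 (tau1f f f1) (tau2f f f2) sf) s j -
          u2of (dg1 p) (dg2 p) (dsg p) (sig1 (tau1f (dg p) (dg1 p)) (dsg p))
             (sig2 (tau1f (dg p) (dg1 p)) (tau2f (dg p) (dg2 p)) (dsg p)) s j) < e.
Proof.
  intros HV hj.
  set (Cd := Cdat m f f1 f2).
  assert (Hm : mono Cd) by apply mono_Cdat.
  destruct HV as [HC [hab [hp [hmap [HB [HC2 HD]]]]]].
  assert (Ug : forall i, (i < S m)%nat -> UC Cd (fun p t => dg p t i) (fun t => f t i)).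
  { intros i hi e he. exists e; split; auto. intros p t [_ B] ht.
    rewrite Rabs_minus_sym. apply (B t i ht hi). }
  assert (Ug1 : forall i, (i < S m)%nat -> UC Cd (fun p t => dg1 p t i) (fun t => f1 t i)).
  { intros i hi e he. exists e; split; auto. intros p t [_ B] ht.
    rewrite Rabs_minus_sym. apply (B t i ht hi). }
  assert (Ug2 : forall i, (i < S m)%nat -> UC Cd (fun p t => dg2 p t i) (fun t => f2 t i)).
  { intros i hi e he. exists e; split; auto. intros p t [_ B] ht.
    rewrite Rabs_minus_sym. apply (B t i ht hi). }
  assert (i0 : I01 0) by (unfold I01; lra). assert (i1 : I01 1) by (unfold I01; lra).
  assert (UA : UC Cd (fun p _ => dg p 0 0%nat) (fun _ => f 0 0%nat)).
  { intros e he. exists e; split; auto. intros p t [_ B] ht.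
    rewrite Rabs_minus_sym. apply (B 0 0%nat i0 ltac:(lia)). }
  assert (UB : UC Cd (fun p _ => dg p 1 0%nat) (fun _ => f 1 0%nat)).
  { intros e he. exists e; split; auto. intros p t [_ B] ht.
    rewrite Rabs_minus_sym. apply (B 1 0%nat i1 ltac:(lia)). }
  assert (UBA : UC Cd (fun p _ => dg p 1 0%nat + -1 * dg p 0 0%nat) (fun _ => f 1 0%nat + -1 * f 0 0%nat))
    by (apply UC_plus; auto; apply UC_scal; auto).
  assert (Uinv : UC Cd (fun p _ => / (dg p 1 0%nat - dg p 0 0%nat)) (fun _ => / (f 1 0%nat - f 0 0%nat))).
  { assert (HBb : forall s, I01 s -> f 1 0%nat - f 0 0%nat <= Rabs ((fun _ => f 1 0%nat + -1 * f 0 0%nat) s))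
      by (intros; simpl; rewrite Rabs_pos_eq; lra).
    eapply UC_ext; [| |exact (UC_inv _ _ _ (f 1 0%nat - f 0 0%nat) Hm ltac:(lra) HBb UBA)].
    - intros; simpl; f_equal; ring.
    - intros; simpl; f_equal; ring. }
  assert (Cf0 : forall i, (i < S m)%nat -> cont01 (fun t => f t i)).
  { intros i hi. destruct (HC i hi) as [A _]. eapply deriv_cont; eauto. }
  assert (Cf1 : forall i, (i < S m)%nat -> cont01 (fun t => f1 t i)).
  { intros i hi. destruct (HC i hi) as [_ [A _]]. eapply deriv_cont; eauto. }
  assert (Cf2 : forall i, (i < S m)%nat -> cont01 (fun t => f2 t i)).
  { intros i hi. destruct (HC i hi) as [_ [_ A]]. auto. }
  assert (hI : forall M : R, Rabs (/ (f 1 0%nat - f 0 0%nat)) <= Rabs (/ (f 1 0%nat - f 0 0%nat))) by (intros; lra).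
  assert (Utau : UC Cd (fun p t => tauf (dg p) t) (tauf f)).
  { destruct (bound01 (fun t => f t 0%nat + -1 * f 0 0%nat)) as [M [_ HM]].
    { apply cont01_plus; [apply Cf0; lia|apply cont01_const]. }
    eapply UC_ext; [| |exact (UC_mult _ _ _ _ _ M _ Hm HM (fun s _ => hI 0)
           (UC_plus _ _ _ _ _ Hm (Ug 0%nat ltac:(lia)) (UC_scal _ _ _ (-1) UA)) Uinv)].
    - intros; unfold tauf; simpl; unfold Rdiv; ring.
    - intros; unfold tauf; simpl; unfold Rdiv; ring. }
  destruct (tau_C2 m f f1 f2 HC) as [Dt0 [Dt1 Ct2]].
  assert (Ct1 : cont01 (tau1f f f1)) by (eapply deriv_cont; eauto).
  assert (pt1 : forall t, I01 t -> 0 < tau1f f f1 t).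
  { intros t ht. unfold tau1f. apply Rdiv_lt_0_compat; auto. lra. }
  destruct (min01 _ Ct1 pt1) as [c0 [hc0 Hc0]].
  assert (Usg : UC Cd dsg sf).
  { apply (UC_sig Cd (fun p t => tauf (dg p) t) (tauf f) dsg sf c0 hc0 Utau).
    - intros r p s [[_ [_ [_ [_ [B _]]]]] _] hs. apply B; auto.
    - auto.
    - intros; eapply lowbound; eauto. }
  assert (Hsf : forall s, I01 s -> I01 (sf s)) by (intros; apply HB; auto).
  assert (Hsp : forall r p s, Cd r p -> I01 s -> I01 (dsg p s)).
  { intros r p s [[_ [_ [_ [_ [B _]]]]] _] hs. apply B; auto. }
  assert (Ut1 : UC Cd (fun p t => tau1f (dg p) (dg1 p) t) (tau1f f f1)).
  { destruct (bound01 _ (Cf1 0%nat ltac:(lia))) as [M [_ HM]].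
    eapply UC_ext; [| |exact (UC_mult _ _ _ _ _ M _ Hm HM (fun s _ => hI 0) (Ug1 0%nat ltac:(lia)) Uinv)];
    intros; unfold tau1f; simpl; unfold Rdiv; ring. }
  assert (Ut2 : UC Cd (fun p t => tau2f (dg p) (dg2 p) t) (tau2f f f2)).
  { destruct (bound01 _ (Cf2 0%nat ltac:(lia))) as [M [_ HM]].
    eapply UC_ext; [| |exact (UC_mult _ _ _ _ _ M _ Hm HM (fun s _ => hI 0) (Ug2 0%nat ltac:(lia)) Uinv)];
    intros; unfold tau2f; simpl; unfold Rdiv; ring. }
  assert (Ut1s := UC_comp Cd _ _ _ _ Hm Ut1 Usg Ct1 Hsp Hsf).
  assert (Ut2s := UC_comp Cd _ _ _ _ Hm Ut2 Usg Ct2 Hsp Hsf).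
  assert (Us1 : UC Cd (fun p s => sig1 (tau1f (dg p) (dg1 p)) (dsg p) s) (sig1 (tau1f f f1) sf)).
  { apply (UC_inv _ _ _ c0 Hm hc0); auto.
    intros s hs. rewrite Rabs_pos_eq; [apply Hc0; auto|]. apply Rlt_le, pt1; auto. }
  assert (Bs1 : forall s, I01 s -> Rabs (sig1 (tau1f f f1) sf s) <= / c0).
  { intros s hs. unfold sig1. specialize (Hc0 _ (Hsf s hs)).
    rewrite Rabs_pos_eq by (apply Rlt_le, Rinv_0_lt_compat; lra).
    apply Rinv_le_contravar; auto. }
  destruct (bnd_comp _ sf Ct2 Hsf) as [Mt2 HMt2].
  assert (Us2 : UC Cd (fun p s => sig2 (tau1f (dg p) (dg1 p)) (tau2f (dg p) (dg2 p)) (dsg p) s)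
                  (sig2 (tau1f f f1) (tau2f f f2) sf)).
  { assert (U11 := UC_mult _ _ _ _ _ _ _ Hm Bs1 Bs1 Us1 Us1).
    assert (U111 := UC_mult _ _ _ _ _ _ _ Hm (fun s hs => bnd_mult _ _ _ _ (Bs1 s hs) (Bs1 s hs)) Bs1 U11 Us1).
    assert (U := UC_scal _ _ _ (-1) (UC_mult _ _ _ _ _ _ _ Hm HMt2
       (fun s hs => bnd_mult _ _ _ _ (bnd_mult _ _ _ _ (Bs1 s hs) (Bs1 s hs)) (Bs1 s hs)) Ut2s U111)).
    eapply UC_ext; [| |exact U]; intros; unfold sig2, sig1; simpl; ring. }
  assert (Bs2 : forall s, I01 s -> Rabs (sig2 (tau1f f f1) (tau2f f f2) sf s) <= Mt2 * (/ c0 * / c0 * / c0)).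
  { intros s hs. unfold sig2. rewrite Rabs_Ropp. apply bnd_mult; [apply HMt2; auto|].
    unfold sig1 in Bs1. repeat apply bnd_mult; apply Bs1; auto. }
  assert (hSj : (S j < S m)%nat) by lia.
  assert (Uu := UC_comp Cd _ _ _ _ Hm (Ug (S j) hSj) Usg (Cf0 _ hSj) Hsp Hsf).
  assert (UF1 := UC_comp Cd _ _ _ _ Hm (Ug1 (S j) hSj) Usg (Cf1 _ hSj) Hsp Hsf).
  assert (UF2 := UC_comp Cd _ _ _ _ Hm (Ug2 (S j) hSj) Usg (Cf2 _ hSj) Hsp Hsf).
  destruct (bnd_comp _ sf (Cf1 _ hSj) Hsf) as [M1 HM1].
  destruct (bnd_comp _ sf (Cf2 _ hSj) Hsf) as [M2 HM2].
  assert (Uu1 := UC_mult _ _ _ _ _ _ _ Hm HM1 Bs1 UF1 Us1).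
  assert (Uu2 := UC_plus _ _ _ _ _ Hm
     (UC_mult _ _ _ _ _ _ _ Hm (fun s hs => bnd_mult _ _ _ _ (HM2 s hs) (Bs1 s hs)) Bs1
        (UC_mult _ _ _ _ _ _ _ Hm HM2 Bs1 UF2 Us1) Us1)
     (UC_mult _ _ _ _ _ _ _ Hm HM1 Bs2 UF1 Us2)).
  intros e he.
  destruct (Uu e he) as [r1 [hr1 Hr1]].
  destruct (Uu1 e he) as [r2 [hr2 Hr2]].
  destruct (Uu2 e he) as [r3 [hr3 Hr3]].
  assert (hr : 0 < Rmin r1 (Rmin r2 r3)) by (repeat apply Rmin_glb_lt; auto).
  exists (Rmin r1 (Rmin r2 r3)); split; auto. intros p hpr s hs.
  assert (c1 : Cd r1 p) by (eapply Hm; [exact hr|apply Rmin_l|exact hpr]).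
  assert (c2 : Cd r2 p) by (eapply Hm; [exact hr| |exact hpr];
     eapply Rle_trans; [apply Rmin_r|apply Rmin_l]).
  assert (c3 : Cd r3 p) by (eapply Hm; [exact hr| |exact hpr];
     eapply Rle_trans; [apply Rmin_r|apply Rmin_r]).
  specialize (Hr1 p s c1 hs). specialize (Hr2 p s c2 hs). specialize (Hr3 p s c3 hs).
  rewrite Rabs_minus_sym in Hr1, Hr2, Hr3.
  unfold uof, u1of, u2of. split; [exact Hr1|split; [exact Hr2|exact Hr3]].
Qed.

Lemma abs_lt_iff x y r : Rabs (x - y) < r -> y - r < x < y + r.
Proof. unfold Rabs; destruct (Rcase_abs (x - y)); intros; lra. Qed.

Lemma open_part m eta dl : 0 < dl < eta -> dl <= 1/4 -> forall V, XOpen m V ->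
  (forall w, V w -> W5d m dl w) -> OmegaOpen m eta (satImage m eta V).
Proof.
  intros hd hd4 V HXV HV. split; [intros f [hf _]; exact hf|].
  intros f [hOf [w [hVw hrep]]].
  destruct hOf as [hG [f1 [f2 [HCf Himm]]]].
  destruct w as [[a b] u].
  destruct (HV _ hVw) as [ha [hb hu]].
  destruct hrep as [rho [[[r1 [r2 Hr]] [R0 [R1 [Rmap [sr [[s1 [s2 Hs]] [smap sinv]]]]]]] Erep]].
  assert (i0 : I01 0) by (unfold I01; lra). assert (i1 : I01 1) by (unfold I01; lra).
  assert (F0 : forall t, I01 t -> f t 0%nat = (1 - rho t) * a + rho t * b).
  { intros t ht. exact (Erep t 0%nat ht ltac:(lia)). }
  assert (Fa : f 0 0%nat = a) by (rewrite F0, R0 by auto; ring).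
  assert (Fb : f 1 0%nat = b) by (rewrite F0, R1 by auto; ring).
  assert (hab : a < b) by lra.
  assert (Ftau : forall t, I01 t -> tauf f t = rho t).
  { intros t ht. unfold tauf. rewrite F0, Fa, Fb by auto. field. lra. }
  destruct Hr as [Dr [Dr1 Cr2]].
  assert (Ef1 : forall t, I01 t -> f1 t 0%nat = (b - a) * r1 t + 0).
  { intros t ht. apply (deriv_unique (fun t => f t 0%nat) (fun t => f1 t 0%nat) (fun t => (b - a) * r1 t + 0)); auto.
    - apply (HCf 0%nat ltac:(lia)).
    - eapply deriv_ext; [exact (deriv_plus _ _ _ _ (deriv_scal (b - a) _ _ Dr) (deriv_const a))| |].
      + intros s hs. rewrite F0 by auto. ring.
      + auto. }
  assert (Rn : forall t, I01 t -> r1 t <> 0).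
  { intros t ht E.
    assert (D1 := deriv_comp _ _ _ _ (proj1 Hs) Dr Rmap).
    assert (D2 : has_deriv01 (fun t => sr (rho t)) (fun _ => 1)).
    { eapply deriv_ext; [exact deriv_id| |]; intros; auto. symmetry. apply sinv; auto. }
    pose proof (deriv_unique _ _ _ t D1 D2 ht). simpl in H. rewrite E in H. lra. }
  assert (Rp := posderiv rho r1 Dr (deriv_cont _ _ Dr1) Rn ltac:(lra)).
  assert (hp : forall t, I01 t -> 0 < f1 t 0%nat).
  { intros t ht. rewrite Ef1 by auto. specialize (Rp t ht). nra. }
  assert (Cf10 : cont01 (fun t => f1 t 0%nat)).
  { destruct (HCf 0%nat ltac:(lia)) as [_ [A _]]. eapply deriv_cont; eauto. }
  destruct (min01 _ Cf10 hp) as [k [hk Hk]].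
  destruct (mk_valid m f f1 f2 HCf ltac:(lra) hp) as [sf HVf].
  assert (Eu : forall s j, I01 s -> (j < m)%nat -> u s j = uof f sf s j).
  { intros s j hs hj. unfold uof.
    destruct HVf as [_ [_ [_ [_ [B _]]]]]. destruct (B s hs) as [B1 B2].
    rewrite (Erep (sf s) (S j) B1 ltac:(lia)). simpl. rewrite <- Ftau by auto. rewrite B2. auto. }
  destruct HXV as [_ HXV2]. destruct (HXV2 _ hVw) as [rV [hrV HrV]].
  destruct (UC_fin (Cdat m f f1 f2) (fun j p => forall s, I01 s ->
    Rabs (uof f sf s j - uof (dg p) (dsg p) s j) < rV /\
    Rabs (u1of f1 sf (sig1 (tau1f f f1) sf) s j -
          u1of (dg1 p) (dsg p) (sig1 (tau1f (dg p) (dg1 p)) (dsg p)) s j) < rV /\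
    Rabs (u2of f1 f2 sf (sig1 (tau1f f f1) sf) (sig2 (tau1f f f1) (tau2f f f2) sf) s j -
          u2of (dg1 p) (dg2 p) (dsg p) (sig1 (tau1f (dg p) (dg1 p)) (dsg p))
             (sig2 (tau1f (dg p) (dg1 p)) (tau2f (dg p) (dg2 p)) (dsg p)) s j) < rV) m
     (mono_Cdat m f f1 f2)) as [rc [hrc Hrc]].
  { intros j hj. destruct (conv m f f1 f2 sf j HVf hj rV hrV) as [r [hr Hr]].
    exists r; split; auto. }
  set (r := Rmin rc (Rmin rV (Rmin (1/8) (k/2)))).
  assert (hr : 0 < r) by (unfold r; repeat apply Rmin_glb_lt; lra).
  assert (hr1 : r <= rc) by (unfold r; apply Rmin_l).
  assert (hr2 : r <= rV) by (unfold r; eapply Rle_trans; [apply Rmin_r|apply Rmin_l]).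
  assert (hr3 : r <= 1/8) by (unfold r; eapply Rle_trans; [apply Rmin_r|];
                              eapply Rle_trans; [apply Rmin_r|apply Rmin_l]).
  assert (hr4 : r <= k/2) by (unfold r; eapply Rle_trans; [apply Rmin_r|];
                              eapply Rle_trans; [apply Rmin_r|apply Rmin_r]).
  exists r. split; auto.
  intros g hOg [F1 [F2 [G1 [G2 [HF [HG Hb]]]]]].
  assert (EF1 : forall t i, I01 t -> (i < S m)%nat -> F1 t i = f1 t i).
  { intros t i ht hi. apply (deriv_unique (fun t => f t i) (fun t => F1 t i) (fun t => f1 t i)); auto.
    - apply (HF i hi). - apply (HCf i hi). }
  assert (EF2 : forall t i, I01 t -> (i < S m)%nat -> F2 t i = f2 t i).
  { intros t i ht hi. apply (deriv_unique (fun t => f1 t i) (fun t => F2 t i) (fun t => f2 t i)); auto.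
    - eapply deriv_ext; [exact (proj1 (proj2 (HF i hi)))|intros; simpl; apply EF1; auto|intros; reflexivity].
    - apply (HCf i hi). }
  assert (Hb' : forall t i, I01 t -> (i < S m)%nat ->
     Rabs (f t i - g t i) < r /\ Rabs (f1 t i - G1 t i) < r /\ Rabs (f2 t i - G2 t i) < r).
  { intros t i ht hi. rewrite <- EF1, <- EF2 by auto. apply Hb; auto. }
  assert (hAB : g 0 0%nat < g 1 0%nat).
  { destruct (Hb' 0 0%nat i0 ltac:(lia)) as [A _]. destruct (Hb' 1 0%nat i1 ltac:(lia)) as [B _].
    apply abs_lt_iff in A. apply abs_lt_iff in B. lra. }
  assert (hpg : forall t, I01 t -> 0 < G1 t 0%nat).
  { intros t ht. destruct (Hb' t 0%nat ht ltac:(lia)) as [_ [A _]]. apply abs_lt_iff in A.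
    specialize (Hk t ht). lra. }
  destruct (mk_valid m g G1 G2 HG hAB hpg) as [sg HVg].
  assert (Cp : Cdat m f f1 f2 rc (g, G1, G2, sg)).
  { split; [exact HVg|]. intros t i ht hi. destruct (Hb' t i ht hi) as [A [B C]].
    unfold dg, dg1, dg2; simpl. repeat split; lra. }
  specialize (Hrc _ Cp).
  split; [exact hOg|].
  exists (g 0 0%nat, g 1 0%nat, uof g sg). split; [|exact (valid_reparam m g G1 G2 sg HVg)].
  apply HrV.
  - exists (u1of G1 sg (sig1 (tau1f g G1) sg)),
           (u2of G1 G2 sg (sig1 (tau1f g G1) sg) (sig2 (tau1f g G1) (tau2f g G2) sg)).
    apply valid_u_C2; auto.
  - simpl. destruct (Hb' 0 0%nat i0 ltac:(lia)) as [A _]. destruct (Hb' 1 0%nat i1 ltac:(lia)) as [B _].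
    rewrite Fa in A. rewrite Fb in B.
    split; [lra|split; [lra|]].
    exists (u1of f1 sf (sig1 (tau1f f f1) sf)),
           (u2of f1 f2 sf (sig1 (tau1f f f1) sf) (sig2 (tau1f f f1) (tau2f f f2) sf)),
           (u1of G1 sg (sig1 (tau1f g G1) sg)),
           (u2of G1 G2 sg (sig1 (tau1f g G1) sg) (sig2 (tau1f g G1) (tau2f g G2) sg)).
    split; [|split].
    + intros j hj. eapply C2_ext; [exact (valid_u_C2 m f f1 f2 sf HVf j hj)|].
      intros t ht. split; [symmetry; apply Eu; auto|split; auto].
    + apply valid_u_C2; auto.
    + intros t i ht hi. rewrite Eu by auto. exact (Hrc i hi t ht).
Qed.

(* n = m + 1 *)
Theorem theorem2p9 (m : nat) (eta : R) (heta : 0 < eta) :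
  exists (delta : R) (W5 : X -> Prop),
    0 < delta < eta /\
    (* W5 is an open subset of (-delta,delta) x (1-delta,1+delta) x C^2 *)
    (forall a b u, W5 (a, b, u) -> - delta < a < delta /\ 1 - delta < b < 1 + delta) /\
    XOpen m W5 /\
    W5 (0, 1, fun _ _ => 0) /\
    (* Xi(W5) subset Omega([0,1],G) *)
    (forall w, W5 w -> Omega m eta (Xi w)) /\
    (* hat W5 = p(Xi(W5)) is open in the quotient *)
    OmegaOpen m eta (satImage m eta W5) /\
    (* p o Xi : W5 -> hat W5 is a homeomorphism: *)
    (* injective *)
    (forall w w', W5 w -> W5 w' -> reparam m (Xi w) (Xi w') -> Xeq m w w') /\
    (* continuous *)
    (forall S, OmegaOpen m eta S -> saturated m eta S ->
       XOpen m (fun w => W5 w /\ S (Xi w))) /\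
    (* open *)
    (forall V, XOpen m V -> (forall w, V w -> W5 w) ->
       OmegaOpen m eta (satImage m eta V)).
Proof.
  set (dl := Rmin (eta / 2) (1 / 4)).
  assert (hd : 0 < dl < eta).
  { unfold dl. split; [apply Rmin_glb_lt; lra|]. pose proof (Rmin_l (eta/2) (1/4)). lra. }
  assert (hd4 : dl <= 1/4) by (unfold dl; apply Rmin_r).
  exists dl, (W5d m dl).
  split; [exact hd|]. split.
  { intros a b u [A [B _]]. auto. }
  split; [apply W5_open|]. split.
  { simpl. split; [lra|split; [lra|]]. exists (fun _ _ => 0), (fun _ _ => 0).
    intros i hi. apply C2_const. }
  split; [intros w hw; apply W5_Omega with dl; auto|].
  split; [apply (open_part m eta dl); auto; apply W5_open|].
  split; [intros w w' hw hw'; apply Xi_inj with dl; auto|].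
  split; [apply cont_part; auto|].
  intros V HV HW. apply open_part with dl; auto.
Qed.
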